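(* In the cost setting and for the subroutine CSE described in the context, assume the event $G$ holds and the threshold satisfies $B\ge\mu^*$. Then CSE does not return Fail, and the optimal arm $i^*$ is never eliminated.
   Context: Delay-as-payoff bandit: $K$ arms, horizon $T$, maximum delay $D\in\mathbb{N}$. Arm $i$ has an unknown distribution $\mathcal{D}_i$ on $\{0,\dots,D\}$; at step $t$ the agent picks $i_t$ based on observed feedback, $d_t\sim\mathcal{D}_{i_t}$ is drawn independently and revealed only at time $t+d_t$; the cost is $c_t=d_t/D$ (to be minimized). Let $\mu(i)=\mathbb{E}_{X\sim\mathcal{D}_i}[X/D]$, $d(i)=D\mu(i)$, $\mu^*=\min_i\mu(i)$ attained at a unique arm $i^*$. Notation at time $t$: $n_t(i)$ is the number of steps $s\le t$ with $i_s=i$; $\hat\mu_t(i)=\frac{1}{n_t(i)}\sum_{s\le t,\,i_s=i}c_s$ (empirical mean of all plays, including not-yet-observed ones); $M_t(i)=\{s\le t: i_s=i,\ s+d_s\ge t\}$, $m_t(i)=|M_t(i)|$; $\mathcal{O}_t(i)=\{s\le t: i_s=i,\ s+d_s<t\}$; $F_t(i)=\{s\le t-D: i_s=i\}$; $a\vee b=\max\{a,b\}$; $S_t$ is the active set at time $t$. CSE with inputs $T$, $K$, $D$, threshold $B$: start with $t=1$, $S=[K]$. While $t<T$: play each arm of $S$ once (round robin), observe arriving feedback, set $t\leftarrow t+|S|$; for each $i\in S$ compute $\hat\mu^-_t(i)=\frac{1}{n_t(i)}\big(\sum_{s\in M_t(i)}\frac{t-s}{D}+\sum_{s\in\mathcal{O}_t(i)}c_s\big)$,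 $L^1_t(i)=\hat\mu^-_t(i)-\sqrt{2\log T/n_t(i)}$; $\hat\mu^F_t(i)=\frac{1}{|F_t(i)|\vee1}\sum_{s\in F_t(i)}c_s$, $L^2_t(i)=\hat\mu^F_t(i)-\sqrt{2\log T/(|F_t(i)|\vee1)}$; $L^3_t(i)=\frac{|S|}{D}\big(\frac{m_t(i)}{2}-8\log T-1\big)$; $LCB_t(i)=\max\{L^1_t(i),L^2_t(i),L^3_t(i)\}$, $UCB_t(i)=\hat\mu^F_t(i)+\sqrt{2\log T/(|F_t(i)|\vee1)}$. Then remove from $S$ every arm $i$ for which some $j\in S$ has $\min\{UCB_t(j),B\}<LCB_t(i)$; if $S=\emptyset$ return (Fail, $t$). If the loop ends return (Success, $t$). Event $G$: for every $t\in[T]$ and every arm $i\in[K]$, $m_t(i)\le\frac{2d(i)}{|S_t|}+16\log T+2$ and $|\mu(i)-\hat\mu_t(i)|\le\sqrt{2\log T/n_t(i)}$. *)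

(* Defs.v *)
From HB Require Import structures.
From mathcomp Require Import all_boot all_order all_algebra.
From mathcomp Require Import reals exp.
Set Implicit Arguments. Unset Strict Implicit. Unset Printing Implicit Defensive.
Import Order.TTheory GRing.Theory Num.Theory.
Local Open Scope ring_scope.

(* Delay-as-payoff bandit and the subroutine CSE, on one realization.
   - Arms are ['I_K]; delays take values in {0..D} (type ['I_D.+1]).
   - [p i] is the distribution D_i of arm i (a pmf on {0..D}).
   - [dl t i] is the delay drawn at step t if arm i is pulled at step t
     (a realization of the independent draws d_t ~ D_{i_t}); the algorithm
     is deterministic given this realization.
   - Time steps are 1, 2, 3, ...  A history [h : hist] records the arm
     played at each step ([None] = no play). *)

Section CSE.
Variable R : realType.
Variables (K D T : nat) (B : R) (dl : nat -> 'I_K -> 'I_D.+1).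

Definition mu (p : 'I_K -> 'I_D.+1 -> R) (i : 'I_K) : R :=
  \sum_(x < D.+1) p i x * ((x : nat)%:R / D%:R).

Definition hist := nat -> option 'I_K.

Definition cost (s : nat) (i : 'I_K) : R := ((dl s i : nat)%:R) / D%:R.

(* the steps s in {1..t} with i_s = i; n_t(i) = size (plays h t i) *)
Definition plays (h : hist) (t : nat) (i : 'I_K) : seq nat :=
  [seq s <- iota 1 t | h s == Some i].

(* \hat mu_t(i) : empirical mean of all plays (observed or not) *)
Definition muhat (h : hist) (t : nat) (i : 'I_K) : R :=
  (\sum_(s <- plays h t i) cost s i) / (size (plays h t i))%:R.

(* M_t(i) : plays whose feedback is not yet observed (s + d_s >= t) *)
Definition Mset (h : hist) (t : nat) (i : 'I_K) : seq nat :=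
  [seq s <- plays h t i | (t <= s + dl s i)%N].

(* O_t(i) : plays whose feedback was observed (s + d_s < t) *)
Definition Oset (h : hist) (t : nat) (i : 'I_K) : seq nat :=
  [seq s <- plays h t i | (s + dl s i < t)%N].

Definition Fset (h : hist) (t : nat) (i : 'I_K) : seq nat :=
  [seq s <- plays h t i | (s + D <= t)%N].

Definition conf (n : nat) : R := Num.sqrt (2 * ln (T%:R) / n%:R).

Definition muminus (h : hist) (t : nat) (i : 'I_K) : R :=
  (\sum_(s <- Mset h t i) ((t - s)%N%:R / D%:R) + \sum_(s <- Oset h t i) cost s i)
    / (size (plays h t i))%:R.

Definition L1 (h : hist) (t : nat) (i : 'I_K) : R :=
  muminus h t i - conf (size (plays h t i)).

Definition nF (h : hist) (t : nat) (i : 'I_K) : nat := maxn (size (Fset h t i)) 1.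

Definition muF (h : hist) (t : nat) (i : 'I_K) : R :=
  (\sum_(s <- Fset h t i) cost s i) / (nF h t i)%:R.

Definition L2 (h : hist) (t : nat) (i : 'I_K) : R := muF h t i - conf (nF h t i).

Definition L3 (S : {set 'I_K}) (h : hist) (t : nat) (i : 'I_K) : R :=
  (#|S|%:R / D%:R) * ((size (Mset h t i))%:R / 2 - 8 * ln (T%:R) - 1).

Definition LCB (S : {set 'I_K}) (h : hist) (t : nat) (i : 'I_K) : R :=
  Num.max (L1 h t i) (Num.max (L2 h t i) (L3 S h t i)).

Definition UCB (h : hist) (t : nat) (i : 'I_K) : R := muF h t i + conf (nF h t i).

(* State of CSE: current time t, active set S, history, and status
   (None = running, Some true = returned Success, Some false = returned Fail). *)
Record state := St { tcur : nat; act : {set 'I_K}; hst : hist; status : option bool }.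

Definition round_hist (h : hist) (t : nat) (S : {set 'I_K}) : hist :=
  fun s => if ((t <= s) && (s < t + #|S|))%N then nth None [seq Some i | i <- enum S] (s - t)%N
           else h s.

Definition step (st : state) : state :=
  match status st with
  | Some _ => st
  | None =>
    if (tcur st < T)%N then
      let t := tcur st in
      let S := act st in
      let h' := round_hist (hst st) t S in
      let t' := t + #|S| in
      let S' := [set i in S | ~~ [exists j in S,
                    Num.min (UCB h' t' j) B < LCB S h' t' i]] in
      St t' S' h' (if S' == set0 then Some false else None)
    else St (tcur st) (act st) (hst st) (Some true)
  end.

Definition init : state := St 1 [set: 'I_K] (fun _ => None) None.

Definition run (N : nat) : state := iter N step init.

(* the complete history of the run (each iteration advances time by >= 1 while
   running, so the run has stopped after T.+1 iterations) *)
Definition final_hist : hist := hst (run T.+1).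

(* S_t : the active set from which i_t is played, i.e. the set of the
   iteration r with t_r <= t < t_{r+1} (the final set after termination) *)
Definition S_at (t : nat) : {set 'I_K} :=
  act (run (count (fun r => (tcur (run r.+1) <= t)%N) (iota 0 T.+1))).

Definition eventG (muv : 'I_K -> R) : Prop :=
  forall t : nat, (0 < t)%N -> forall i : 'I_K,
    (size (Mset final_hist t i))%:R
       <= 2 * (D%:R * muv i) / (#|S_at t|)%:R + 16 * ln (T%:R) + 2
    /\ ((0 < size (plays final_hist t i))%N ->
        `|muv i - muhat final_hist t i| <= conf (size (plays final_hist t i))).

End CSE.

(* Main.v *)
Require Import Defs.
From HB Require Import structures.
From mathcomp Require Import all_boot all_order all_algebra.
From mathcomp Require Import reals exp.
From mathcomp Require Import ring lra zify.
Import Order.TTheory GRing.Theory Num.Theory.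
Local Open Scope ring_scope.

Lemma runS (R : realType) K D T (B : R) (dl : nat -> 'I_K -> 'I_D.+1) n :
  run T B dl n.+1 = step T B dl (run T B dl n).
Proof. by rewrite /run iterS. Qed.

Lemma step_tcur (R : realType) K D T (B : R) (dl : nat -> 'I_K -> 'I_D.+1) st :
  (tcur st <= tcur (step T B dl st))%N.
Proof. rewrite /step; case: (status st) => [b|] //=; case: ifP => //= _; exact: leq_addr. Qed.

Lemma tcur_mono (R : realType) K D T (B : R) (dl : nat -> 'I_K -> 'I_D.+1) m k :
  (m <= k)%N -> (tcur (run T B dl m) <= tcur (run T B dl k))%N.
Proof.
elim: k => [|k IH]; first by rewrite leqn0 => /eqP ->.
rewrite leq_eqVlt => /orP[/eqP -> //|Hm].
rewrite runS; exact: leq_trans (IH Hm) (step_tcur _ _ _ _ _ _ _).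
Qed.

Lemma step_hist (R : realType) K D T (B : R) (dl : nat -> 'I_K -> 'I_D.+1) st s :
  (s < tcur st)%N -> hst (step T B dl st) s = hst st s.
Proof.
rewrite /step; case: (status st) => //=; case: ifP => //= _ Hs.
by rewrite /round_hist leqNgt Hs.
Qed.

Lemma hist_stable (R : realType) K D T (B : R) (dl : nat -> 'I_K -> 'I_D.+1) m k s :
  (m <= k)%N -> (s < tcur (run T B dl m))%N -> hst (run T B dl k) s = hst (run T B dl m) s.
Proof.
move=> Hmk Hs; elim: k Hmk => [|k IH]; first by rewrite leqn0 => /eqP ->.
rewrite leq_eqVlt => /orP[/eqP -> //|Hm].
rewrite runS step_hist ?IH //.
exact: leq_trans Hs (@tcur_mono _ _ _ _ _ _ m k Hm).
Qed.

Lemma hist_none (R : realType) K D T (B : R) (dl : nat -> 'I_K -> 'I_D.+1) n s :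
  (tcur (run T B dl n) <= s)%N -> hst (run T B dl n) s = None.
Proof.
elim: n s => [|n IH] s //=.
rewrite /step; case: (status _) => [b|] /=; first exact: IH.
case: ifP => _ /= Hs; last exact: IH.
rewrite /round_hist.
have -> : ((tcur (run T B dl n) <= s) && (s < tcur (run T B dl n) + #|act (run T B dl n)|))%N = false.
  by rewrite ltnNge Hs andbF.
apply: IH; exact: leq_trans (leq_addr _ _) Hs.
Qed.

Lemma count_ltn n m : (n <= m)%N -> count (fun r => (r < n)%N) (iota 0 m) = n.
Proof.
move=> /subnKC <-; rewrite iotaD count_cat add0n.
rewrite (@eq_in_count _ _ predT (iota 0 n)); last by move=> x; rewrite mem_iota.
rewrite count_predT size_iota.
rewrite (@eq_in_count _ _ pred0); first by rewrite count_pred0 addn0.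
by move=> x; rewrite mem_iota /= => /andP[H _]; rewrite ltnNge H.
Qed.

Lemma muminus_le (R : realType) K D (dl : nat -> 'I_K -> 'I_D.+1) h t i :
  muminus R dl h t i <= muhat R dl h t i.
Proof.
rewrite /muminus /muhat ler_wpM2r ?invr_ge0 ?ler0n //.
rewrite /Mset /Oset; set P := plays h t i; clearbody P; rewrite !big_filter [X in _ <= X](bigID (fun s => t <= s + dl s i)%N) /=.
apply: lerD.
  apply: ler_sum => s Hs; rewrite /cost ler_wpM2r ?invr_ge0 ?ler0n // ler_nat leq_subLR.
  exact: Hs.
rewrite le_eqVlt; apply/orP; left; apply/eqP; apply: eq_bigl => s; by rewrite ltnNge.
Qed.
Lemma plays_eq K (h1 h2 : hist K) t i :
  (0 < t)%N -> (forall s, (s < t)%N -> h1 s = h2 s) -> h1 t = None ->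
  plays h1 t i = plays h2 t.-1 i.
Proof.
case: t => [//|k] _ H Hn; rewrite /plays.
have E : iota 1 k.+1 = iota 1 k ++ iota (1 + k) 1 by rewrite -iotaD addn1.
rewrite E filter_cat /= add1n Hn /= cats0.
apply: eq_in_filter => s; rewrite mem_iota => /andP[_ Hs]; rewrite H //.
Qed.

Lemma Fset_eq K D (h1 h2 : hist K) t i :
  (0 < D)%N -> (forall s, (s < t)%N -> h1 s = h2 s) ->
  Fset D h1 t i = plays h2 (t - D) i.
Proof.
move=> D0 H; rewrite /Fset /plays -filter_predI.
case: (leqP D t) => HDt.
  have E : iota 1 t = iota 1 (t - D) ++ iota (1 + (t - D)) D by rewrite -iotaD subnK.
  rewrite E filter_cat.
  rewrite [X in _ ++ X](@eq_in_filter _ _ pred0); last first.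
    move=> s; rewrite mem_iota /= => /andP[Hs _]; apply/negbTE; rewrite negb_and; apply/orP; left.
    rewrite -ltnNge; lia.
  rewrite filter_pred0 cats0; apply: eq_in_filter => s; rewrite mem_iota /= => /andP[H1 H2].
  have -> : (s + D <= t)%N by lia.
  by rewrite H //; lia.
have -> : (t - D = 0)%N by lia.
rewrite /= (@eq_in_filter _ _ pred0) ?filter_pred0 //.
move=> s; rewrite mem_iota /= => /andP[Hs _]; apply/negbTE; rewrite negb_and; apply/orP; left.
rewrite -ltnNge; lia.
Qed.
Lemma mu_ge0 (R : realType) K D (p : 'I_K -> 'I_D.+1 -> R) i :
  (forall i x, 0 <= p i x) -> 0 <= mu p i.
Proof.
move=> Hp; rewrite /mu; apply: sumr_ge0 => x _; apply: mulr_ge0 => //.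
by apply: divr_ge0; rewrite ler0n.
Qed.

Lemma mu_le1 (R : realType) K D (p : 'I_K -> 'I_D.+1 -> R) i :
  (0 < D)%N -> (forall i x, 0 <= p i x) -> (forall i, \sum_(x < D.+1) p i x = 1) ->
  mu p i <= 1.
Proof.
move=> D0 Hp Hs; rewrite /mu -[X in _ <= X](Hs i); apply: ler_sum => x _.
rewrite -[X in _ <= X]mulr1; apply: ler_wpM2l => //.
rewrite ler_pdivrMr ?ltr0n // mul1r ler_nat; by have := ltn_ord x; lia.
Qed.

Lemma ln2_ge (R : realType) : 1 / 2 <= ln (2 : R).
Proof.
have H := @le_ln1Dx R (- (1/2)).
have E : 1 + - (1 / 2) = (2 : R)^-1 by field.
rewrite E lnV ?posrE // in H.
have : -1 < - (1/2 : R) by lra.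
move=> /H; lra.
Qed.

Lemma conf1 (R : realType) T : (2 <= T)%N -> 1 <= conf R T 1.
Proof.
move=> HT; rewrite /conf divr1 -[X in X <= _]sqrtr1.
have HlnT : ln (2 : R) <= ln T%:R.
  by rewrite ler_ln ?posrE ?ltr0n ?ler_nat //; lia.
have := ln2_ge R => H2.
have Hx : 1 <= 2 * ln (T%:R : R) by lra.
by rewrite ler_sqrt //; lra.
Qed.

Lemma conf_ge0 (R : realType) T n : 0 <= conf R T n.
Proof. exact: sqrtr_ge0. Qed.

Lemma conf_bounds (R : realType) (m mh c : R) : `|m - mh| <= c -> mh - c <= m /\ m <= mh + c.
Proof. rewrite ler_distl => /andP[H1 H2]; split; lra. Qed.

Lemma L3_bound (R : realType) (S D m mu l : R) : 0 < S -> 0 < D ->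
  m <= 2 * (D * mu) / S + 16 * l + 2 -> S / D * (m / 2 - 8 * l - 1) <= mu.
Proof.
move=> S0 D0 H.
have H1 : m / 2 - 8 * l - 1 <= D * mu / S.
  have E : 2 * (D * mu) / S = 2 * (D * mu / S) by rewrite !mulrA.
  rewrite E in H; move: H; set q := D * mu / S; move=> H; lra.
apply: le_trans (ler_wpM2l _ H1) _; first by apply: divr_ge0; apply: ltW.
rewrite le_eqVlt; apply/orP; left; apply/eqP; field.
by apply/andP; split; rewrite gt_eqF.
Qed.

Lemma Mset_le K D (dl : nat -> 'I_K -> 'I_D.+1) (h1 h2 : hist K) t i :
  plays h1 t i = plays h2 t.-1 i -> (size (Mset dl h1 t i) <= size (Mset dl h2 t.-1 i))%N.
Proof.
move=> E; rewrite /Mset E !size_filter; apply: sub_count => s /=.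
by apply: leq_trans; apply: leq_pred.
Qed.

Theorem lemma3 (R : realType) (K D T : nat) (p : 'I_K -> 'I_D.+1 -> R)
  (dl : nat -> 'I_K -> 'I_D.+1) (B : R) (istar : 'I_K) :
  (0 < D)%N ->
  (forall i x, 0 <= p i x) ->
  (forall i, \sum_(x < D.+1) p i x = 1) ->
  (forall j, j != istar -> mu p istar < mu p j) ->
  eventG T B dl (mu p) ->
  mu p istar <= B ->
  forall N : nat,
    status (run T B dl N) != Some false /\ istar \in act (run T B dl N).
Proof.
move=> D0 Hp Hs Hopt HG HB.
suff H : forall N, status (run T B dl N) != Some false /\ istar \in act (run T B dl N) /\
   (status (run T B dl N) = None -> (N < tcur (run T B dl N))%N).
  by move=> N; have [H1 [H2 _]] := H N.
elim=> [|n [IH1 [IH2 IH3]]]; first by rewrite /= inE.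
have Erun := @runS _ _ _ T B dl n.
case Hst: (status (run T B dl n)) => [b|].
  by rewrite Erun /step Hst /=; split => //; split => //; rewrite Hst.
case Htc: (tcur (run T B dl n) < T)%N; last first.
  by rewrite Erun /step Hst Htc /=.
have Ht1 := IH3 Hst.
set st := run T B dl n in Erun Hst Htc IH2 Ht1 *.
set t := tcur st in Htc Ht1 *.
set S := act st in IH2 *.
set h' := round_hist (hst st) t S.
set t' := (t + #|S|)%N.
have HS0 : (0 < #|S|)%N by apply/card_gt0P; exists istar.
have Etc : tcur (run T B dl n.+1) = t' by rewrite Erun /step Hst Htc.
have Eh : hst (run T B dl n.+1) = h' by rewrite Erun /step Hst Htc.
have Htt' : (t < t')%N by rewrite /t'; lia.
have HT2 : (2 <= T)%N by lia.
have Hfin : forall s, (s < t')%N -> h' s = final_hist T B dl s.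
  move=> s Hs0; rewrite /final_hist -Eh; apply: esym; apply: hist_stable; first by lia.
  by rewrite Etc; exact: Hs0.
have Hnone : forall s, (t' <= s)%N -> h' s = None.
  move=> s Hs0; rewrite /h' /round_hist.
  have -> : ((t <= s) && (s < t + #|S|))%N = false by apply/negbTE; rewrite negb_and; apply/orP; right; rewrite -leqNgt.
  by apply: hist_none; rewrite -/st -/t; lia.
have Hplays : forall i, plays h' t' i = plays (final_hist T B dl) t'.-1 i.
  by move=> i; apply: plays_eq => //; [lia | apply: Hnone].
have HF : forall i, Fset D h' t' i = plays (final_hist T B dl) (t' - D) i.
  by move=> i; apply: Fset_eq.
have HSat : S_at T B dl t'.-1 = S.
  rewrite /S_at.
  have -> : count (fun r => (tcur (run T B dl r.+1) <= t'.-1)%N) (iota 0 T.+1) = n.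
    rewrite -[RHS](@count_ltn n T.+1); last by lia.
    apply: eq_count => r /=; rewrite -(@runS R K D T B dl r); case: (ltnP r n) => Hr.
      have := @tcur_mono R K D T B dl r.+1 n Hr; rewrite -/st -/t => H1; lia.
    have := @tcur_mono R K D T B dl n.+1 r.+1 Hr; rewrite Etc => H1; lia.
  by [].
have Ht'0 : (0 < t'.-1)%N by lia.
have Hlcb : LCB R T dl S h' t' istar <= mu p istar.
  rewrite /LCB !ge_max; apply/andP; split; [|apply/andP; split].
  - rewrite /L1; have Hmm := muminus_le R K D dl h' t' istar.
    case: (posnP (size (plays h' t' istar))) => Hn0.
      rewrite /muhat Hn0 invr0 mulr0 in Hmm.
      rewrite Hn0 /conf mulr0n invr0 mulr0 sqrtr0 subr0.
      exact: le_trans Hmm (@mu_ge0 _ _ _ p istar Hp).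
    have [_ HG2] := HG t'.-1 Ht'0 istar.
    rewrite -Hplays in HG2; have [H1 _] := @conf_bounds _ _ _ _ (HG2 Hn0).
    have E : muhat R dl (final_hist T B dl) t'.-1 istar = muhat R dl h' t' istar by rewrite /muhat Hplays.
    rewrite E in H1; lra.
  - rewrite /L2 /muF /nF HF.
    case: (posnP (size (plays (final_hist T B dl) (t' - D) istar))) => Hn.
      move/eqP: Hn; rewrite size_eq0 => /eqP ->; rewrite big_nil mul0r.
      rewrite sub0r; apply: le_trans _ (@mu_ge0 _ _ _ p istar Hp); rewrite oppr_le0; exact: conf_ge0.
    case: (posnP (t' - D)) => Htd.
      by move: Hn; rewrite Htd /plays.
    have [_ HG2] := HG (t' - D)%N Htd istar.
    have [H1 _] := @conf_bounds _ _ _ _ (HG2 Hn).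
    by rewrite (maxn_idPl Hn); exact: H1.
  - rewrite /L3; have [HG1 _] := HG t'.-1 Ht'0 istar.
    rewrite HSat in HG1.
    apply: L3_bound; [by rewrite ltr0n | by rewrite ltr0n |].
    apply: le_trans HG1; rewrite ler_nat; apply: Mset_le; exact: Hplays.
have Hucb : forall j, j \in S -> mu p istar <= UCB R T dl h' t' j.
  move=> j Hj.
  have Hmuj : mu p istar <= mu p j.
    by case: (eqVneq j istar) => [-> //|/Hopt /ltW].
  apply: le_trans Hmuj _.
  rewrite /UCB /muF /nF HF.
  case: (posnP (size (plays (final_hist T B dl) (t' - D) j))) => Hn.
    move/eqP: Hn; rewrite size_eq0 => /eqP ->; rewrite big_nil mul0r add0r /=.
    exact: le_trans (@mu_le1 _ _ _ p j D0 Hp Hs) (@conf1 R T HT2).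
  case: (posnP (t' - D)) => Htd.
    by move: Hn; rewrite Htd /plays.
  have [_ HG2] := HG (t' - D)%N Htd j.
  have [_ H2] := @conf_bounds _ _ _ _ (HG2 Hn).
  by rewrite (maxn_idPl Hn); exact: H2.
have HS' : istar \in [set i in S | ~~ [exists j in S, Num.min (UCB R T dl h' t' j) B < LCB R T dl S h' t' i]].
  rewrite inE IH2 /=; apply/negP => /existsP [j /andP [Hj]].
  rewrite gt_min !ltNge (le_trans Hlcb (Hucb j Hj)) (le_trans Hlcb HB).
  by [].
rewrite Erun /step Hst Htc /=.
have Hne : [set i in S | ~~ [exists j in S, Num.min (UCB R T dl h' t' j) B < LCB R T dl S h' t' i]] != set0.
  by apply/set0Pn; exists istar.
rewrite (negbTE Hne); split => //; split => // _; change (n.+1 < t + #|S|)%N; lia.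
Qed.
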